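(* Let $\Gamma$ be a totally ordered additive abelian group, $E$ a finite set, $r\ge0$, and $\nu\colon\Delta_E^r\to\overline{\Gamma}$ a function with cage $\mathbf{a}=(a_s)_{s\in E}$. Let $\pi\colon E'\to E$ be a map of finite sets with $|\pi^{-1}(s)|=a_s$ for all $s\in E$, and let the multisymmetric lift $M_\pi(\nu)\colon\binom{E'}{r}\to\overline{\Gamma}$ be $M_\pi(\nu)(S')=\nu\big(\sum_{s'\in S'}e_{\pi(s')}\big)$. Then $\nu$ is $M$-convex if and only if $M_\pi(\nu)$ is a valuated matroid of rank $r$ on $E'$.
   Context: $\overline{\Gamma}=\Gamma\sqcup\{\infty\}$ with $\infty$ larger than every element of $\Gamma$. $e_s$ is the standard basis vector of $\mathbb{Z}^E$; $\Delta_E^r=\{\alpha\in\mathbb{Z}^E_{\ge0}\mid\sum_e\alpha_e=r\}$; $\binom{E'}{r}$ is the set of $r$-element subsets of $E'$. The cage of $\nu$ is the tuple $(a_s)_{s\in E}$ where $a_s$ is the smallest non-negative integer with $a_s\geq\alpha_s$ for all $\alpha\in\Delta_E^r$ with $\nu(\alpha)\neq\infty$. An $M$-convex function of rank $r$ is a map $\nu\colon\Delta_E^r\to\overline{\Gamma}$, not identically $\infty$, such that for all $\alpha,\beta\in\Delta_E^r$ and $s\in E$ with $\alpha_s>\beta_s$ there is $t\in E$ with $\beta_t>\alpha_t$ and $\nu(\alpha)+\nu(\beta)\geq\nu(\alpha-e_s+e_t)+\nu(\beta-e_t+e_s)$. A valuated matroid of rank $r$ on a finite set $X$ is a map $\mu\colon\binom{X}{r}\to\overline{\Gamma}$,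 not identically $\infty$, such that for all $S,T\in\binom{X}{r}$ and $s\in S- T$ there is $t\in T- S$ with $\mu(S)+\mu(T)\geq\mu(S-\{s\}\cup\{t\})+\mu(T-\{t\}\cup\{s\})$. *)

(* Defs.v *)
From mathcomp Require Import all_boot all_order all_algebra.
Set Implicit Arguments. Unset Strict Implicit. Unset Printing Implicit Defensive.
Import GRing.Theory.
Local Open Scope ring_scope.

Section Defs.
Variable G : zmodType.
Variable leG : rel G.

Definition ordered_group_axioms : Prop :=
  [/\ reflexive leG, antisymmetric leG, transitive leG, total leG
    & forall a b c : G, leG a b -> leG (a + c) (b + c)].

(* Gamma-bar = Gamma ∪ {oo}, represented by option G with None = oo. *)
Definition addGb (x y : option G) : option G :=
  match x, y with Some a, Some b => Some (a + b) | _, _ => None end.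

Definition leGb (x y : option G) : bool :=
  match x, y with
  | _, None => true
  | None, Some _ => false
  | Some a, Some b => leG a b
  end.
End Defs.

Section Defs2.
Variable G : zmodType.
Variable leG : rel G.

Definition inDelta (E : finType) (r : nat) (al : {ffun E -> nat}) : bool :=
  (\sum_(e : E) al e)%N == r.

Definition ebase (E : finType) (s : E) : {ffun E -> nat} :=
  [ffun u => nat_of_bool (u == s)].

(* alpha - e_s + e_t  (only used when alpha_s >= 1) *)
Definition exch (E : finType) (al : {ffun E -> nat}) (s t : E) : {ffun E -> nat} :=
  [ffun u => (al u - (u == s) + (u == t))%N].

Definition is_cage (E : finType) (r : nat) (nu : {ffun E -> nat} -> option G)
  (a : E -> nat) : Prop :=
  forall s : E,
    (forall al, inDelta r al -> nu al != None -> (al s <= a s)%N) /\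
    (forall b : nat, (forall al, inDelta r al -> nu al != None -> (al s <= b)%N) ->
       (a s <= b)%N).

Definition M_convex (E : finType) (r : nat) (nu : {ffun E -> nat} -> option G) : Prop :=
  (exists al, inDelta r al /\ nu al != None) /\
  forall al be : {ffun E -> nat}, inDelta r al -> inDelta r be ->
  forall s : E, (be s < al s)%N ->
  exists t : E, (al t < be t)%N /\
    leGb leG (addGb (nu (exch al s t)) (nu (exch be t s))) (addGb (nu al) (nu be)).

Definition valuated_matroid (X : finType) (r : nat) (mu : {set X} -> option G) : Prop :=
  (exists S : {set X}, #|S| = r /\ mu S != None) /\
  forall S T : {set X}, #|S| = r -> #|T| = r ->
  forall s, s \in S :\: T ->
  exists2 t, t \in T :\: S &
    leGb leG (addGb (mu (t |: (S :\ s))) (mu (s |: (T :\ t)))) (addGb (mu S) (mu T)).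

Definition multisym_lift (E E' : finType) (pi : E' -> E)
  (nu : {ffun E -> nat} -> option G) (S' : {set E'}) : option G :=
  nu [ffun u => (\sum_(s' in S') ebase (pi s') u)%N].
End Defs2.

(* Main.v *)
Require Import Defs.
From mathcomp Require Import all_boot all_order all_algebra.
From mathcomp Require Import zify.
Import GRing.Theory.
Set Implicit Arguments. Unset Strict Implicit.

Section Aux.
Variables (E E' : finType) (pi : E' -> E).

Definition vec (S : {set E'}) : {ffun E -> nat} :=
  [ffun u => (\sum_(s' in S) ebase (pi s') u)%N].

Lemma vecE S u : vec S u = #|[set x in S | pi x == u]|.
Proof.
rewrite ffunE -sum1_card; symmetry.
rewrite (eq_bigl (fun x => (x \in S) && (pi x == u))); last first.
  by move=> x; rewrite inE.
rewrite big_mkcondr /=; apply: eq_bigr => x _; rewrite /ebase ffunE eq_sym.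
by case: (pi x == u).
Qed.

Lemma sum_vec S : (\sum_u vec S u)%N = #|S|.
Proof.
rewrite -sum1_card.
under eq_bigr do rewrite ffunE.
rewrite exchange_big /=; apply: eq_bigr => x _.
rewrite (bigD1 (pi x)) //= big1 /ebase ?ffunE ?eqxx ?addn0 //.
by move=> u /negbTE; rewrite ffunE => ->.
Qed.

Lemma vec_exch (S : {set E'}) (s t : E') : s \in S -> t \notin S ->
  vec (t |: (S :\ s)) = exch (vec S) (pi s) (pi t).
Proof.
move=> sS tS; apply/ffunP => u; rewrite !ffunE.
have tn : t \notin S :\ s by rewrite !inE negb_and tS orbT.
rewrite big_setU1 //= (big_setD1 s sS) /= /ebase !ffunE.
case: (u == pi s); case: (u == pi t) => /=; lia.
Qed.

Lemma exch_same (al : {ffun E -> nat}) p : (0 < al p)%N -> exch al p p = al.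
Proof.
move=> h; apply/ffunP => u; rewrite ffunE.
case: (eqVneq u p) => [->|ne] /=; first lia.
by rewrite subn0 addn0.
Qed.

Definition rank (x : E') : nat := index x (enum [set y | pi y == pi x]).
Definition real (al : {ffun E -> nat}) : {set E'} := [set x | rank x < al (pi x)].

Lemma vec_real (al : {ffun E -> nat}) : (forall u, al u <= #|[set y | pi y == u]|) -> vec (real al) = al.
Proof.
move=> Hle; apply/ffunP => u; rewrite vecE.
have -> : [set x in real al | pi x == u] =
          [set x in take (al u) (enum [set y | pi y == u])].
  apply/setP => x; rewrite !inE.
  case: (eqVneq (pi x) u) => [<-|ne].
    by rewrite andbT /rank in_take // mem_enum inE.
  rewrite andbF; apply/esym/negbTE; apply/negP => /mem_take.
  by rewrite mem_enum inE (negbTE ne).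
rewrite cardsE (card_uniqP (take_uniq _ (enum_uniq _))).
by apply: size_takel; rewrite -cardE.
Qed.

Lemma rank_ex u i : i < #|[set y | pi y == u]| -> exists x, pi x = u /\ rank x = i.
Proof.
move=> hi.
have [y _] : exists y, y \in [set y | pi y == u].
  by apply/card_gt0P; apply: leq_ltn_trans hi.
set x := nth y (enum [set y | pi y == u]) i.
have hx : x \in enum [set y | pi y == u] by apply: mem_nth; rewrite -cardE.
have px : pi x = u by move: hx; rewrite mem_enum inE => /eqP.
exists x; split => //.
by rewrite /rank px index_uniq ?enum_uniq // -cardE.
Qed.
End Aux.

Lemma mlE (G : zmodType) (E E' : finType) (pi : E' -> E)
  (nu : {ffun E -> nat} -> option G) S :
  multisym_lift pi nu S = nu (vec pi S).
Proof. by []. Qed.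

Lemma leGb_refl (G : zmodType) (leG : rel G) : reflexive leG ->
  forall x, leGb leG x x.
Proof. by move=> h [g|] //=. Qed.

Lemma exists_gt (E : finType) r (al be : {ffun E -> nat}) s :
  inDelta r al -> inDelta r be -> be s < al s -> exists t, al t < be t.
Proof.
move=> Dal Dbe h.
case: (boolP [exists t, al t < be t]) => [/existsP //|/existsPn H].
have H1 : (\sum_(t | t != s) be t <= \sum_(t | t != s) al t)%N.
  by apply: leq_sum => t _; rewrite leqNgt H.
move/eqP: Dal; rewrite (bigD1 s) //= => Dal.
move/eqP: Dbe; rewrite (bigD1 s) //= => Dbe.
lia.
Qed.

Unset Implicit Arguments. Set Strict Implicit.
Theorem proposition1p4 (G : zmodType) (leG : rel G)
  (HG : ordered_group_axioms leG)
  (E : finType) (r : nat) (nu : {ffun E -> nat} -> option G) (a : E -> nat)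
  (Hcage : is_cage r nu a)
  (E' : finType) (pi : E' -> E)
  (Hpi : forall s : E, #|[set s' | pi s' == s]| = a s) :
  M_convex leG r nu <-> valuated_matroid leG r (multisym_lift pi nu).
Proof.
have Hrefl : reflexive leG by case: HG.
have Hle : forall al, inDelta r al -> nu al != None ->
    forall u, al u <= #|[set y | pi y == u]|.
  by move=> al Dal Nal u; rewrite Hpi; apply: (Hcage u).1.
split.
- move=> [[al [Dal Nal]] Hmc]; split.
    have Hv := vec_real (Hle al Dal Nal).
    exists (real pi al); rewrite mlE Hv; split => //.
    by rewrite -(sum_vec pi) Hv; apply/eqP.
  move=> S T cS cT s; rewrite inE => /andP [sT sS].
  have DS : inDelta r (vec pi S) by rewrite /inDelta sum_vec cS.
  have DT : inDelta r (vec pi T) by rewrite /inDelta sum_vec cT.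
  case: (ltnP (vec pi T (pi s)) (vec pi S (pi s))) => h.
  + have [t [ht Hl]] := Hmc _ _ DS DT (pi s) h.
    have : ~~ ([set x in T | pi x == t] \subset [set x in S | pi x == t]).
      by apply/negP => /subset_leq_card; rewrite -!vecE leqNgt ht.
    case/subsetPn => t'; rewrite !inE => /andP [t'T /eqP pt'].
    rewrite pt' eqxx andbT => t'S.
    exists t'; first by rewrite inE t'S t'T.
    by rewrite !mlE !vec_exch // pt'.
  + have : ~~ ([set x in T | pi x == pi s] \subset [set x in S | pi x == pi s] :\ s).
      apply/negP => /subset_leq_card.
      rewrite [X in _ <= X -> _](_ : _ = #|[set x in S | pi x == pi s]| - 1).
        have p0 : 0 < vec pi S (pi s).
          by rewrite vecE; apply/card_gt0P; exists s; rewrite inE sS eqxx.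
        by rewrite -!vecE; lia.
      by rewrite (cardsD1 s [set x in S | pi x == pi s]) !inE sS eqxx /=; lia.
    case/subsetPn => t'; rewrite !inE => /andP [t'T /eqP pt'].
    rewrite pt' eqxx andbT => t'S.
    have t'S' : t' \notin S.
      apply/negP => h'; move: t'S; rewrite h' andbT negbK => /eqP ets.
      by move: t'T; rewrite ets (negbTE sT).
    exists t'; first by rewrite inE t'S' t'T.
    rewrite !mlE !vec_exch // pt' !exch_same ?leGb_refl //.
      by rewrite vecE; apply/card_gt0P; exists t'; rewrite inE t'T pt' eqxx.
    by rewrite vecE; apply/card_gt0P; exists s; rewrite inE sS eqxx.
- move=> [[S [cS NS]] Hvm]; split.
    exists (vec pi S); split. rewrite /inDelta sum_vec. apply/eqP. exact: cS.
    by rewrite -mlE.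
  move=> al be Dal Dbe s h.
  case Ea: (nu al) => [x|]; last first.
    have [t ht] := exists_gt Dal Dbe h; exists t; split => //.
    by case: (addGb _ _).
  case Eb: (nu be) => [y|]; last first.
    have [t ht] := exists_gt Dal Dbe h; exists t; split => //.
    by case: (addGb _ _); case: (nu (exch al s t)).
  have Na : nu al != None by rewrite Ea.
  have Nb : nu be != None by rewrite Eb.
  have Hla := Hle al Dal Na.
  have Hlb := Hle be Dbe Nb.
  have va := vec_real Hla; have vb := vec_real Hlb.
  have cA : #|real pi al| = r by rewrite -(sum_vec pi) va; apply/eqP.
  have cB : #|real pi be| = r by rewrite -(sum_vec pi) vb; apply/eqP.
  have [x0 [px0 rx0]] : exists x0, pi x0 = s /\ rank pi x0 = be s.
    by apply: rank_ex; apply: leq_trans h (Hla s).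
  have x0in : x0 \in real pi al :\: real pi be.
    by rewrite !inE px0 rx0 h ltnn.
  have [t' ] := Hvm _ _ cA cB x0 x0in.
  rewrite inE => /andP [t'A t'B].
  have x0A : x0 \in real pi al by move: x0in; rewrite inE => /andP [].
  have x0B : x0 \notin real pi be by move: x0in; rewrite inE => /andP [].
  rewrite !mlE !vec_exch // va vb px0 Ea Eb => Hineq.
  exists (pi t'); split => //.
  move: t'A t'B; rewrite !inE -leqNgt; exact: leq_ltn_trans.
Qed.
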